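(* Let $X$ be a semigroup and $Z\subset X$ a subsemigroup such that $X\setminus Z$ is an ideal in $X$. If $\mathcal A\in\upsilon(Z)\subset\upsilon(X)$ and $\mathcal B\in\upsilon(X)$ satisfy $\mathcal A=\mathcal A*\mathcal B*\mathcal A$, then $\mathcal A=\mathcal A*\mathcal B_Z*\mathcal A$, where $\mathcal B_Z=\{B\in\mathcal B: B\subset Z\}\in\upsilon(Z)$.
   Context: An upfamily on a set $X$ is a family of nonempty subsets of $X$ closed under taking supersets in $X$; $\upsilon(X)$ is the set of all upfamilies, with operation $\mathcal A*\mathcal B=\big\langle \bigcup_{a\in A} a*B_a : A\in\mathcal A,\ \{B_a\}_{a\in A}\subset\mathcal B\big\rangle$, where $\langle\mathcal C\rangle=\{A\subset X:\exists C\in\mathcal C,\ C\subset A\}$. For $Z\subset X$, $\upsilon(Z)$ is identified with the subset $\{\{A\subset X: A\cap Z\in\mathcal F\}:\mathcal F\in\upsilon(Z)\}$ of $\upsilon(X)$ (the image under the map induced by inclusion), i.e. upfamilies on $X$ having a member contained in $Z$ and generated by their members contained in $Z$. A nonempty subset $I$ of a semigroup $X$ is an ideal if $XI\cup IX\subset I$. *)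

(* Defs.v *)
Definition subset {X : Type} (A B : X -> Prop) : Prop := forall x, A x -> B x.

Definition family (X : Type) := (X -> Prop) -> Prop.

Definition is_upfamily {X : Type} (F : family X) : Prop :=
  (forall A, F A -> exists x, A x) /\
  (forall A B, F A -> subset A B -> F B).

(* An upfamily on Z ⊂ X: subsets of Z are represented as subsets of X
   contained in Z; members are nonempty subsets of Z, closed under
   supersets inside Z. *)
Definition is_upfamily_on {X : Type} (Z : X -> Prop) (F : family X) : Prop :=
  (forall A, F A -> subset A Z) /\
  (forall A, F A -> exists x, A x) /\
  (forall A B, F A -> subset A B -> subset B Z -> F B).

(* The map υ(Z) -> υ(X) induced by inclusion: F |-> {A ⊂ X : A ∩ Z ∈ F}. *)
Definition embed {X : Type} (Z : X -> Prop) (F : family X) : family X :=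
  fun A => F (fun x => A x /\ Z x).

Definition in_upsilon_sub {X : Type} (Z : X -> Prop) (A : family X) : Prop :=
  exists F, is_upfamily_on Z F /\ A = embed Z F.

Definition restrict {X : Type} (Z : X -> Prop) (B : family X) : family X :=
  embed Z (fun S => B S /\ subset S Z).

(* 𝒜 * 𝓑 = < ⋃_{a∈A} a*B_a : A ∈ 𝒜, {B_a}_{a∈A} ⊂ 𝓑 > *)
Definition fprod {X : Type} (op : X -> X -> X) (A B : family X) : family X :=
  fun S => exists A0, A A0 /\ exists f : X -> (X -> Prop),
    (forall a, A0 a -> B (f a)) /\
    (forall x, (exists a b, A0 a /\ f a b /\ x = op a b) -> S x).

Definition is_subsemigroup {X : Type} (op : X -> X -> X) (Z : X -> Prop) : Prop :=
  forall x y, Z x -> Z y -> Z (op x y).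

Definition is_ideal {X : Type} (op : X -> X -> X) (I : X -> Prop) : Prop :=
  (exists x, I x) /\ (forall x y, I y -> I (op x y) /\ I (op y x)).

(* Main.v *)
Require Import Defs.
From Stdlib Require Import FunctionalExtensionality PropExtensionality Classical.

Theorem lemma3p3 (X : Type) (op : X -> X -> X)
  (assoc : forall x y z, op (op x y) z = op x (op y z))
  (Z : X -> Prop) (HZ : is_subsemigroup op Z)
  (HI : is_ideal op (fun x => ~ Z x))
  (A B : family X) (HA : in_upsilon_sub Z A) (HB : is_upfamily B)
  (H : A = fprod op (fprod op A B) A) :
  A = fprod op (fprod op A (restrict Z B)) A.
Proof.
  assert (E : forall S, A S <-> fprod op (fprod op A B) A S).
  { intro S. rewrite <- H. tauto. }
  destruct HA as [F [[FZ [Fne Fup]] HAF]].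
  destruct HB as [Bne Bup].
  destruct HI as [_ HI].
  assert (Ane : forall T, A T -> exists c, T c /\ Z c).
  { intros T hT. rewrite HAF in hT. unfold embed in hT.
    destruct (Fne _ hT) as [c hc]. exists c. exact hc. }
  apply functional_extensionality. intro S.
  apply propositional_extensionality. split.
  - intro hS.
    assert (hSZ : A (fun x => S x /\ Z x)).
    { rewrite HAF in hS |- *. unfold embed in *.
      apply (Fup _ _ hS).
      - intros x [hx hz]. tauto.
      - intros x [[hx hz] _]. exact hz. }
    apply E in hSZ.
    destruct hSZ as [A0 [hA0 [f [hf hsub]]]].
    assert (A0Z : forall x, A0 x -> Z x).
    { intros x hx. destruct (Ane _ (hf x hx)) as [c [hc hcz]].
      destruct (hsub (op x c)) as [_ hz].
      { exists x, c. auto. }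
      apply NNPP. intro hn. exact (proj2 (HI c x hn) hz). }
    destruct hA0 as [A1 [hA1 [g [hg hsub1]]]].
    exists A0. split.
    + exists A1. split; [exact hA1|]. exists g. split; [|exact hsub1].
      intros a ha. unfold restrict, embed. split.
      * apply (Bup _ _ (hg a ha)). intros b hb. split; [exact hb|].
        apply NNPP. intro hn.
        apply (proj1 (HI a b hn)). apply A0Z. apply hsub1. exists a, b. auto.
      * intros x [_ hx]. exact hx.
    + exists f. split; [exact hf|]. intros x hx. exact (proj1 (hsub x hx)).
  - intro hS. apply E.
    destruct hS as [A0 [hA0 [f [hf hsub]]]].
    exists A0. split; [|exists f; auto].
    destruct hA0 as [A1 [hA1 [g [hg hsub1]]]].
    exists A1. split; [exact hA1|]. exists g. split; [|exact hsub1].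
    intros a ha. destruct (hg a ha) as [hb _].
    apply (Bup _ _ hb). intros x [hx _]. exact hx.
Qed.
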